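(* Let $\gamma>0$, $c_u>0$, $c_a>0$, $c_s>0$ and $R^*=\log\left(\frac{c_u}{c_a}+1\right)$. Consider the optimization problem $$\min_{0\le s\le 1,\ T\ge 0}\ J_i(s,T):=\gamma(1-s)R^*+c_s\,(sR^*-T)$$ subject to: (IR-$u$) $T\le R^*$; (IC-$u$) $s\ge T/R^*$; (IR-$i$) $T-sR^*\ge 0$; (F-$i$) $s>1-\frac{1}{\gamma R^*}$. Then the optimal insurance policy is $s^*=1$, $T^*=R^*=\log\left(\frac{c_u}{c_a}+1\right)$.
   Context: $\log$ is the natural logarithm. $s$ is the coverage level and $T$ the subscription fee of an insurance policy; $c_s$ is a trade-off parameter of the insurer between the user's average effective loss and the insurer's profit. *)

(* Defs.v *)
From Stdlib Require Import Reals.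
Open Scope R_scope.

Definition Rstar (cu ca : R) : R := ln (cu / ca + 1).

Definition J (gamma cs Rs s T : R) : R :=
  gamma * (1 - s) * Rs + cs * (s * Rs - T).

Definition feasible (gamma Rs s T : R) : Prop :=
  0 <= s <= 1 /\ 0 <= T /\
  T <= Rs /\
  s >= T / Rs /\
  T - s * Rs >= 0 /\
  s > 1 - 1 / (gamma * Rs).

Definition is_unique_optimum (gamma cs Rs s0 T0 : R) : Prop :=
  feasible gamma Rs s0 T0 /\
  (forall s T, feasible gamma Rs s T ->
     J gamma cs Rs s0 T0 <= J gamma cs Rs s T) /\
  (forall s T, feasible gamma Rs s T ->
     J gamma cs Rs s T <= J gamma cs Rs s0 T0 -> s = s0 /\ T = T0).

(* Main.v *)
Require Import Defs.
From Stdlib Require Import Reals Lra.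
Open Scope R_scope.

Lemma feas_eq (gamma Rs s T : R) : 0 < Rs -> feasible gamma Rs s T -> T = s * Rs.
Proof.
  intros HR (Hs & HT & H1 & H2 & H3 & H4).
  assert (T = (T / Rs) * Rs) by (field; lra).
  assert (T / Rs * Rs <= s * Rs) by (apply Rmult_le_compat_r; lra).
  lra.
Qed.

Theorem proposition4 (gamma cu ca cs : R) :
  0 < gamma -> 0 < cu -> 0 < ca -> 0 < cs ->
  is_unique_optimum gamma cs (Rstar cu ca) 1 (Rstar cu ca).
Proof.
  intros Hg Hu Ha Hc.
  assert (HR : 0 < Rstar cu ca).
  { unfold Rstar. rewrite <- ln_1. apply ln_increasing; try lra.
    assert (0 < cu / ca) by (apply Rdiv_lt_0_compat; lra). lra. }
  set (Rs := Rstar cu ca) in *.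
  assert (HJ0 : J gamma cs Rs 1 Rs = 0) by (unfold J; ring).
  assert (HJ : forall s T, feasible gamma Rs s T -> J gamma cs Rs s T = gamma * (1 - s) * Rs).
  { intros s T Hf. rewrite (feas_eq _ _ _ _ HR Hf). unfold J; ring. }
  split; [|split].
  - unfold feasible. repeat split; try lra.
    + unfold Rdiv. rewrite Rinv_r; lra.
    + assert (0 < 1 / (gamma * Rs)) by (apply Rdiv_lt_0_compat; try lra; apply Rmult_lt_0_compat; lra).
      lra.
  - intros s T Hf. rewrite HJ0, (HJ s T Hf).
    destruct Hf as (Hs & _).
    assert (0 <= gamma * (1 - s)) by (apply Rmult_le_pos; lra).
    apply Rmult_le_pos; lra.
  - intros s T Hf Hle. rewrite HJ0, (HJ s T Hf) in Hle.
    pose proof (feas_eq _ _ _ _ HR Hf) as HT.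
    destruct Hf as (Hs & _).
    assert (s = 1).
    { destruct (Req_dec s 1); auto.
      assert (0 < gamma * (1 - s) * Rs) by (repeat apply Rmult_lt_0_compat; lra). lra. }
    subst. split; ring.
Qed.
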